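(* The graph $K_{10}-3K_2$ has a triangular embedding in an orientable surface, and the octahedral graph $O_{10}$ has orientable genus $\lceil (4\cdot 2)/3\rceil = 3$.
   Context: $K_{10}-3K_2$ is $K_{10}$ with the 3 edges of a matching removed. $O_{10}$ is $K_{10}$ with the edges of a perfect matching removed. An embedding is triangular if it is cellular and every face is bounded by a closed walk of length 3. *)

(* Defs.v *)
(* Combinatorial (rotation-system) model of orientable embeddings. *)
From mathcomp Require Import all_boot all_fingroup.
Set Implicit Arguments. Unset Strict Implicit. Unset Printing Implicit Defensive.

Section Embeddings.
Variable n : nat.
Implicit Types (adj : rel 'I_n) (R : 'I_n -> {perm 'I_n}).

Definition darts adj : {set 'I_n * 'I_n} := [set d | adj d.1 d.2].

Definition num_edges adj : nat := #|darts adj| %/ 2.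

Definition is_rotation adj R : Prop :=
  forall v : 'I_n,
    (forall u, ~~ adj v u -> R v u = u) /\
    (forall u w, adj v u -> adj v w -> fconnect (fun x => R v x) u w).

Definition face_step R (d : 'I_n * 'I_n) : 'I_n * 'I_n := (d.2, R d.2 d.1).

(* faces of the cellular orientable embedding determined by R = orbits of face_step *)
Definition faces adj R : {set {set 'I_n * 'I_n}} :=
  [set [set y | fconnect (face_step R) d y] | d in darts adj].

Definition num_faces adj R : nat := #|faces adj R|.

(* The embedding given by R lies on the orientable surface of genus g:
   Euler's formula V - E + F = 2 - 2g. *)
Definition rot_genus_is adj R g : Prop :=
  n + num_faces adj R + 2 * g = 2 + num_edges adj.

Definition rot_genus_ge adj R g : Prop :=
  n + num_faces adj R + 2 * g <= 2 + num_edges adj.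

Definition orientable_genus_is adj g : Prop :=
  (exists R, is_rotation adj R /\ rot_genus_is adj R g) /\
  (forall R, is_rotation adj R -> rot_genus_ge adj R g).

Definition has_triangular_orientable_embedding adj : Prop :=
  exists R, is_rotation adj R /\
    forall d, d \in darts adj -> fingraph.order (face_step R) d = 3.

End Embeddings.

(* K_10 - 3K_2 : vertices 0..9, remove the matching {0,1},{2,3},{4,5} *)
Definition K10_minus_3K2 : rel 'I_10 :=
  fun u v => (u != v) && ~~ (((val u)./2 == (val v)./2) && (val u < 6)).

(* O_10 : K_10 minus the perfect matching {0,1},{2,3},...,{8,9} *)
Definition O10 : rel 'I_10 := fun u v => (val u)./2 != (val v)./2.

(* Main.v *)
Require Import Defs.
From mathcomp Require Import all_boot all_fingroup.
Set Implicit Arguments. Unset Strict Implicit. Unset Printing Implicit Defensive.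
From mathcomp Require Import zify.

Definition mk (m : nat) : 'I_10 := Ordinal (ltn_pmod m (isT : 0 < 10)).
Definition L10 : seq 'I_10 := map mk (iota 0 10).
Lemma memL10 (x : 'I_10) : x \in L10.
Proof.
apply/mapP; exists (val x); last by apply: val_inj; rewrite /= modn_small.
by rewrite mem_iota /= ltn_ord.
Qed.
Lemma allL10 (P : pred 'I_10) : all P L10 -> forall x, P x.
Proof. by move=> /allP H x; apply: H; apply: memL10. Qed.

Definition L2 : seq ('I_10 * 'I_10) := [seq (a, b) | a <- L10, b <- L10].
Lemma memL2 (d : 'I_10 * 'I_10) : d \in L2.
Proof. by case: d => a b; apply/allpairsP; exists (a, b); rewrite !memL10. Qed.
Lemma allL2 (P : pred ('I_10 * 'I_10)) : all P L2 -> forall x, P x.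
Proof. by move=> /allP H x; apply: H; apply: memL2. Qed.
Lemma uniqL2 : uniq L2. Proof. by vm_compute. Qed.
Lemma cardL2 (P : pred ('I_10 * 'I_10)) : #|P| = count P L2.
Proof.
rewrite -size_filter -(card_uniqP (filter_uniq P uniqL2)).
by apply: eq_card => d; rewrite mem_filter memL2 andbT.
Qed.

Definition cyc (T : eqType) (f : T -> T) (x : T) : seq T :=
  traject f x (find (fun k => iter k.+1 f x == x) (iota 0 100)).+1.
Lemma cyc_head (T : eqType) (f : T -> T) x : x \in cyc f x.
Proof. by rewrite /cyc /= mem_head. Qed.

Definition tab (t : seq (seq nat)) (v x : 'I_10) : 'I_10 :=
  mk (nth 0 (nth [::] t v) x).

Definition TK : seq (seq nat) :=
 [:: [:: 0; 1; 9; 6; 2; 3; 4; 5; 7; 8]; [:: 0; 1; 7; 8; 3; 2; 5; 4; 9; 6];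
     [:: 4; 5; 2; 3; 8; 9; 7; 1; 6; 0]; [:: 5; 4; 2; 3; 9; 8; 0; 6; 1; 7];
     [:: 6; 7; 0; 1; 4; 5; 9; 8; 2; 3]; [:: 7; 6; 1; 0; 4; 5; 8; 9; 3; 2];
     [:: 3; 9; 8; 7; 0; 1; 6; 2; 5; 4]; [:: 8; 2; 6; 9; 1; 0; 3; 7; 4; 5];
     [:: 9; 3; 4; 5; 7; 6; 2; 0; 8; 1]; [:: 2; 8; 5; 4; 6; 7; 1; 3; 0; 9]].

Definition TO : seq (seq nat) :=
 [:: [:: 0; 1; 9; 6; 2; 3; 4; 5; 7; 8]; [:: 0; 1; 7; 8; 3; 2; 5; 4; 9; 6];
     [:: 4; 5; 2; 3; 8; 9; 7; 1; 6; 0]; [:: 5; 4; 2; 3; 9; 8; 0; 6; 1; 7];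
     [:: 6; 7; 0; 1; 4; 5; 9; 8; 2; 3]; [:: 7; 6; 1; 0; 4; 5; 8; 9; 3; 2];
     [:: 3; 9; 8; 2; 0; 1; 6; 7; 5; 4]; [:: 8; 2; 3; 9; 1; 0; 6; 7; 4; 5];
     [:: 1; 3; 4; 5; 7; 6; 2; 0; 8; 9]; [:: 2; 0; 5; 4; 6; 7; 1; 3; 8; 9]].

Definition inj_check (t : seq (seq nat)) : bool :=
  all (fun v => all (fun x => all (fun y => (tab t v x == tab t v y) ==> (x == y))
     L10) L10) L10.

Lemma tab_inj t : inj_check t -> forall v, injective (tab t v).
Proof.
move=> H v x y E.
have := allL10 (allL10 (allL10 H v) x) y.
by rewrite E eqxx => /eqP.
Qed.

Lemma TK_inj v : injective (tab TK v).
Proof. by apply: tab_inj; vm_compute. Qed.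
Lemma TO_inj v : injective (tab TO v).
Proof. by apply: tab_inj; vm_compute. Qed.

Definition RK (v : 'I_10) : {perm 'I_10} := perm (@TK_inj v).
Definition RO (v : 'I_10) : {perm 'I_10} := perm (@TO_inj v).

Definition fstep (F : 'I_10 -> 'I_10 -> 'I_10) (d : 'I_10 * 'I_10) :=
  (d.2, F d.2 d.1).

Definition rot_check (adj : rel 'I_10) F : bool :=
  all (fun v => all (fun u => ~~ adj v u ==> (F v u == u)) L10 &&
     all (fun u => adj v u ==> (fcycle (F v) (cyc (F v) u) &&
        all (fun w => adj v w ==> (w \in cyc (F v) u)) L10)) L10) L10.

Lemma rot_checkP adj (R : 'I_10 -> {perm 'I_10}) F :
  (forall v, R v =1 F v) -> rot_check adj F -> is_rotation adj R.
Proof.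
move=> RF H v; have /andP[H1 H2] := allL10 H v; split.
  by move=> u Hu; rewrite RF; apply/eqP; move: (allL10 H1 u); rewrite Hu.
move=> u w Hu Hw; rewrite (eq_fconnect (RF v)).
move: (allL10 H2 u); rewrite Hu implyTb => /andP[Hc Hall].
rewrite (fconnect_cycle Hc (cyc_head _ _)).
by move: (allL10 Hall w); rewrite Hw.
Qed.

Lemma face_stepE (R : 'I_10 -> {perm 'I_10}) F :
  (forall v, R v =1 F v) -> face_step R =1 fstep F.
Proof. by move=> RF [a b]; rewrite /face_step /fstep /= RF. Qed.

Lemma triangular_K : has_triangular_orientable_embedding K10_minus_3K2.
Proof.
have RF : forall v, RK v =1 tab TK v by move=> v x; rewrite permE.
exists RK; split.
  by apply: (rot_checkP RF); vm_compute.
pose fs := fstep (tab TK).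
have H : all (fun d => K10_minus_3K2 d.1 d.2 ==>
   [&& fcycle fs (cyc fs d), uniq (cyc fs d) & size (cyc fs d) == 3]) L2
  by vm_compute.
move=> d; rewrite inE => Hd.
have -> : fingraph.order (face_step RK) d = fingraph.order fs d.
  by apply: eq_card => y; exact: eq_fconnect (face_stepE RF) d y.
move: (allL2 H d); rewrite Hd implyTb => /and3P[H1 H2 /eqP H3].
by rewrite (order_cycle H1 H2 (cyc_head _ _)).
Qed.

Lemma fix_fconnect (T : finType) (g : T -> T) u w :
  g u = u -> fconnect g u w -> w = u.
Proof.
move=> gu; have Hc : fcycle g [:: u] by rewrite /= gu eqxx.
by rewrite (fconnect_cycle Hc (mem_head _ _)) inE => /eqP.
Qed.

Lemma O10_other : all (fun v => all (fun u => O10 v u ==>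
   has (fun w => O10 v w && (w != u)) L10) L10) L10.
Proof. by vm_compute. Qed.

Lemma lowerO R : is_rotation O10 R -> 3 * num_faces O10 R <= #|darts O10|.
Proof.
move=> Hrot.
set f := face_step R.
have finj : injective f.
  move=> [a b] [c d]; rewrite /f /face_step /= => [[Ebd]].
  by subst d => /perm_inj ->.
have nb : forall v u, O10 v u -> R v u != u.
  move=> v u Hvu; apply/eqP => Hfix.
  have := allL10 (allL10 O10_other v) u; rewrite Hvu implyTb => /hasP[w _].
  case/andP => Hw /eqP; apply.
  exact: fix_fconnect Hfix ((Hrot v).2 u w Hvu Hw).
have sym : forall u v, O10 u v = O10 v u by move=> u v; rewrite /O10 eq_sym.
have closed : forall v u, O10 v u -> O10 v (R v u).
  move=> v u Hvu; case Hn0: (O10 v (R v u)) => //; move/negbT: Hn0 => Hn.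
  have := (Hrot v).1 _ Hn => /perm_inj E.
  by move: (nb v u Hvu); rewrite E eqxx.
have fD : forall d, d \in darts O10 -> f d \in darts O10.
  move=> [a b]; rewrite !inE /= => Hab; apply: closed; by rewrite sym.
have f1 : forall d, d \in darts O10 -> f d != d.
  move=> [a b]; rewrite inE /= => Hab; apply/eqP => [[Eba _]].
  by move: Hab; rewrite Eba /O10 eqxx.
have f2 : forall d, d \in darts O10 -> f (f d) != d.
  move=> [a b]; rewrite inE /= => Hab; apply/eqP => [[Eba _]].
  by move: (nb b a); rewrite sym Hab Eba eqxx => /(_ isT).
pose g d := [set y | fconnect f d y].
have gf : forall d, g (f d) = g d.
  move=> d; apply/setP => y; rewrite !inE; apply/idP/idP => H.
    exact: connect_trans (fconnect1 f d) H.
  apply: connect_trans _ H; rewrite fconnect_sym //; exact: fconnect1.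
have Hfaces : faces O10 R = [set g d | d in darts O10] by [].
rewrite /num_faces -[#|darts O10|]sum1_card.
rewrite (partition_big g (mem (faces O10 R))); last first.
  by move=> d Hd; rewrite Hfaces; apply: imset_f.
rewrite -sum1_card big_distrr /=.
apply: leq_sum => F; rewrite Hfaces => /imsetP[d0 Hd0 ->].
rewrite muln1 sum1dep_card.
have U : uniq [:: d0; f d0; f (f d0)].
  have a1 := f1 _ Hd0; have a2 := f2 _ Hd0.
  have a3 : f (f d0) != f d0 by rewrite (inj_eq finj).
  by rewrite /= !inE !negb_or (eq_sym d0 (f d0)) (eq_sym d0) (eq_sym (f d0)) a1 a2 a3.
have C3 : 3 <= #|[:: d0; f d0; f (f d0)]| by rewrite (card_uniqP U).
apply: (leq_trans C3); apply: subset_leq_card; apply/subsetP => y.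
rewrite !inE => /or3P[] /eqP ->; rewrite ?gf eqxx andbT //.
- by move: Hd0; rewrite inE.
- by move: (fD _ Hd0); rewrite inE.
- by move: (fD _ (fD _ Hd0)); rewrite inE.
Qed.

Definition repsN : seq (nat * nat) :=
  [:: (0, 2); (0, 3); (0, 4); (0, 5); (0, 6); (0, 7); (0, 8); (0, 9);
      (1, 2); (1, 3); (1, 4); (1, 5); (1, 6); (1, 7); (1, 8); (2, 6);
      (2, 7); (2, 8); (2, 9); (3, 7); (3, 8); (3, 9); (4, 8); (4, 9);
      (5, 8); (5, 9)].
Definition reps : seq ('I_10 * 'I_10) := map (fun p => (mk p.1, mk p.2)) repsN.

Lemma darts_O10 : #|darts O10| = 80.
Proof.
rewrite (@eq_card _ _ [pred d : 'I_10 * 'I_10 | O10 d.1 d.2]);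
  last by move=> d; rewrite inE.
by rewrite cardL2; vm_compute.
Qed.

Lemma faces_O : num_faces O10 RO = 26.
Proof.
have RF : forall v, RO v =1 tab TO v by move=> v x; rewrite permE.
pose fs := fstep (tab TO).
have FE := eq_fconnect (face_stepE RF).
have /and4P[C1 C2 C3 C4] : [&& all (fun r => O10 r.1 r.2 && fcycle fs (cyc fs r)) reps,
   uniq reps,
   all (fun d => O10 d.1 d.2 ==> has (fun r => d \in cyc fs r) reps) L2 &
   all (fun r1 => all (fun r2 => (r2 \in cyc fs r1) ==> (r1 == r2)) reps) reps]
  by vm_compute.
pose g d := [set y | fconnect (face_step RO) d y].
have Hf : faces O10 RO = [set g r | r in reps].
  apply/setP => F; apply/imsetP/imsetP => [[d Hd ->]|[r Hr ->]].
    move: Hd; rewrite inE => Hd.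
    move: (allL2 C3 d); rewrite Hd implyTb => /hasP[r Hr Hdr].
    have /andP[_ Hc] := allP C1 r Hr.
    exists r => //; apply/setP => y; rewrite !inE !FE.
    by rewrite (fconnect_cycle Hc Hdr) (fconnect_cycle Hc (cyc_head _ _)).
  exists r => //; rewrite inE; by have /andP[-> _] := allP C1 r Hr.
rewrite /num_faces Hf card_in_imset; first by rewrite (card_uniqP C2).
move=> r1 r2 Hr1 Hr2 E.
have : r2 \in g r1 by rewrite E inE; exact: connect0.
rewrite inE FE.
have /andP[_ Hc] := allP C1 r1 Hr1.
rewrite (fconnect_cycle Hc (cyc_head _ _)) => Hin.
by have := allP (allP C4 r1 Hr1) r2 Hr2; rewrite Hin implyTb => /eqP.
Qed.

Theorem mainTheorem6 :
  has_triangular_orientable_embedding K10_minus_3K2 /\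
  orientable_genus_is O10 3.
Proof.
split; first exact: triangular_K.
split.
  exists RO; split.
    apply: (rot_checkP (F := tab TO)); first by move=> v x; rewrite permE.
    by vm_compute.
  by rewrite /rot_genus_is /num_edges faces_O darts_O10.
move=> R HR; have := lowerO HR.
rewrite /rot_genus_ge /num_edges darts_O10; lia.
Qed.
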